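(* Let $\mathbf{x}=(x_n)$ be a summable sequence of positive reals whose cardinal function $f$ is bounded, and let $z,w>0$ be reals such that either (1) $z+w>\sum_{n=1}^\infty x_n$, or (2) $z=w=\frac12\sum_{n=1}^\infty x_n$. Let $h$ be the cardinal function of the sequence $(z,w,x_1,x_2,\dots)$. Then $\max h\le 3\max f$. In particular, if $\mathrm{rng}(f)=\{1,2\}$ then $\max h\le6$.
   Context: For a summable sequence $\mathbf{x}=(x_n)$ of positive reals, $\mathcal{A}(\mathbf{x})=\{\sum_{n\in A}x_n: A\subseteq\mathbb{N}\}$ is its achievement set and its cardinal function $f$ assigns to $x\in\mathcal{A}(\mathbf{x})$ the cardinality (a positive integer, $\omega$, or $\mathfrak{c}$) of $\{(\varepsilon_n)\in\{0,1\}^{\mathbb{N}}:\sum\varepsilon_nx_n=x\}$. The cardinal function is bounded if there is $N\in\mathbb{N}$ with $f(x)\le N$ for all $x$; then $\max f$ denotes its largest value. *)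

(* Defs.v *)
From Stdlib Require Import Reals Lia.
From Coquelicot Require Import Coquelicot.
Open Scope R_scope.

Definition reps (x : nat -> R) (y : R) (e : nat -> bool) : Prop :=
  is_series (fun n => if e n then x n else 0) y.

Definition in_ach (x : nat -> R) (y : R) : Prop := exists e, reps x y e.

(* The set P of 0-1 sequences has at most N elements
   (any N+1 members contain two (pointwise) equal ones). *)
Definition card_le (P : (nat -> bool) -> Prop) (N : nat) : Prop :=
  forall g : nat -> nat -> bool,
    (forall i, (i <= N)%nat -> P (g i)) ->
    exists i j, (i < j <= N)%nat /\ forall n, g i n = g j n.

Definition card_ge (P : (nat -> bool) -> Prop) (k : nat) : Prop :=
  exists g : nat -> nat -> bool,
    (forall i, (i < k)%nat -> P (g i)) /\
    forall i j, (i < j < k)%nat -> exists n, g i n <> g j n.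

Definition card_eq (P : (nat -> bool) -> Prop) (k : nat) : Prop :=
  card_ge P k /\ card_le P k.

(* The cardinal function of x is bounded and its maximum value is M. *)
Definition is_max_card (x : nat -> R) (M : nat) : Prop :=
  (forall y, card_le (reps x y) M) /\
  exists y, in_ach x y /\ card_eq (reps x y) M.

Definition rng_card_12 (x : nat -> R) : Prop :=
  (forall y, in_ach x y -> card_eq (reps x y) 1 \/ card_eq (reps x y) 2) /\
  (exists y, in_ach x y /\ card_eq (reps x y) 1) /\
  (exists y, in_ach x y /\ card_eq (reps x y) 2).

Definition prepend2 (z w : R) (x : nat -> R) : nat -> R :=
  fun n => match n with 0%nat => z | 1%nat => w | S (S k) => x k end.

(* Main.v *)
Require Import Defs.
From Stdlib Require Import Reals Lra Lia List Classical.
From Coquelicot Require Import Coquelicot.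
Open Scope R_scope.

Lemma card_le_mono (P Q : (nat -> bool) -> Prop) n n' :
  (forall h, P h -> Q h) -> (n <= n')%nat -> card_le Q n -> card_le P n'.
Proof.
  intros HPQ Hn HQ g Hg.
  destruct (HQ g) as [i [j [Hij Heq]]].
  - intros i Hi; apply HPQ, Hg; lia.
  - exists i, j; split; [lia|exact Heq].
Qed.

Lemma filter_len_split {A} (f : A -> bool) (l : list A) :
  (length (filter f l) + length (filter (fun a => negb (f a)) l))%nat = length l.
Proof.
  induction l as [|a l IH]; simpl; [reflexivity|].
  destruct (f a); simpl; lia.
Qed.

Lemma pick_ord (g : nat -> nat -> bool) N i j :
  i <> j -> (i <= N)%nat -> (j <= N)%nat -> (forall n, g i n = g j n) ->
  exists i j, (i < j <= N)%nat /\ forall n, g i n = g j n.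
Proof.
  intros Hne Hi Hj He.
  destruct (Nat.lt_ge_cases i j).
  - exists i, j; split; [lia|exact He].
  - exists j, i; split; [lia|intro n; symmetry; apply He].
Qed.

Lemma extract (g : nat -> nat -> bool) (f : nat -> bool) (A : (nat -> bool) -> Prop) N m :
  let l := filter f (seq 0 (S N)) in
  (S m <= length l)%nat ->
  (forall i, (i <= N)%nat -> f i = true -> A (g i)) ->
  card_le A m ->
  exists i j, (i < j <= N)%nat /\ forall n, g i n = g j n.
Proof.
  intros l Hlen HA Hc.
  assert (Hin : forall k, (k < length l)%nat -> (nth k l 0%nat <= N)%nat /\ f (nth k l 0%nat) = true).
  { intros k Hk. pose proof (nth_In l 0%nat Hk) as H.
    apply filter_In in H. destruct H as [H1 H2]. apply in_seq in H1. split; [lia|exact H2]. }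
  destruct (Hc (fun k => g (nth k l 0%nat))) as [k1 [k2 [Hk Heq]]].
  { intros k Hk. destruct (Hin k) as [H1 H2]; [lia|]. apply HA; assumption. }
  assert (ND : NoDup l) by (apply NoDup_filter, seq_NoDup).
  pose proof (proj1 (NoDup_nth l 0%nat) ND) as Hnd.
  destruct (Hin k1) as [H1 _]; [lia|]. destruct (Hin k2) as [H2 _]; [lia|].
  apply (pick_ord g N (nth k1 l 0%nat) (nth k2 l 0%nat)); auto.
  intro E. apply Hnd in E; lia.
Qed.

Lemma card_le_union (P A B : (nat -> bool) -> Prop) (d : (nat -> bool) -> bool) m n :
  card_le A m -> card_le B n ->
  (forall h, P h -> if d h then A h else B h) ->
  card_le P (m + n).
Proof.
  intros HA HB Hd g Hg.
  pose proof (filter_len_split (fun i => d (g i)) (seq 0 (S (m+n)))) as Hs.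
  rewrite length_seq in Hs.
  destruct (Nat.le_gt_cases (S m) (length (filter (fun i => d (g i)) (seq 0 (S (m+n)))))) as [H|H].
  - apply (extract g (fun i => d (g i)) A (m+n) m H); auto.
    intros i Hi Hf. specialize (Hd _ (Hg i Hi)). rewrite Hf in Hd. exact Hd.
  - apply (extract g (fun i => negb (d (g i))) B (m+n) n); [lia| |auto].
    intros i Hi Hf. specialize (Hd _ (Hg i Hi)). destruct (d (g i)); [discriminate|exact Hd].
Qed.

Lemma rep_shift (x : nat -> R) z w y e :
  reps (prepend2 z w x) y e ->
  reps x (y - (if e 0%nat then z else 0) - (if e 1%nat then w else 0)) (fun n => e (S (S n))).
Proof.
  unfold reps. intro H.
  pose (a := fun n => if e n then prepend2 z w x n else 0). change (is_series a y) in H.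
  assert (H1 : is_series (fun k => a (S k)) (y - a 0%nat)).
  { apply is_series_incr_1. unfold plus; simpl. replace (y - a 0%nat + a 0%nat) with y by ring. exact H. }
  assert (H2 : is_series (fun k => a (S (S k))) (y - a 0%nat - a 1%nat)).
  { apply (is_series_incr_1 (fun k => a (S k))). unfold plus; simpl. replace (y - a 0%nat - a 1%nat + a 1%nat) with (y - a 0%nat) by ring. exact H1. }
  exact H2.
Qed.

Section An.
Variable x : nat -> R.
Hypothesis xpos : forall n, 0 < x n.
Hypothesis xs : ex_series x.

Lemma rep_ge v e n : reps x v e -> e n = true -> x n <= v.
Proof.
  unfold reps; intros H He.
  apply is_series_Reals in H.
  assert (Hp : forall k, 0 <= (if e k then x k else 0)).
  { intro k; destruct (e k); [left; apply xpos|right; reflexivity]. }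
  pose proof (sum_incr _ n _ H Hp) as Hs.
  destruct n as [|n].
  - simpl in Hs. rewrite He in Hs. exact Hs.
  - rewrite tech5 in Hs. rewrite He in Hs. eapply Rle_trans; [|exact Hs]. rewrite <- (Rplus_0_l (x (S n))) at 1. apply Rplus_le_compat_r. apply cond_pos_sum. exact Hp.
Qed.

Lemma rep_nonneg v e : reps x v e -> 0 <= v.
Proof.
  unfold reps; intros H. apply is_series_Reals in H.
  assert (Hp : forall k, 0 <= (if e k then x k else 0)).
  { intro k; destruct (e k); [left; apply xpos|right; reflexivity]. }
  pose proof (sum_incr _ 0 _ H Hp) as Hs. simpl in Hs. specialize (Hp 0%nat). lra.
Qed.

Lemma rep_le v e : reps x v e -> v <= Series x.
Proof.
  unfold reps; intros H. rewrite <- (is_series_unique _ _ H).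
  apply Series_le; [|exact xs].
  intro k; destruct (e k); split; try lra; left; apply xpos.
Qed.

Lemma rep0 e : reps x 0 e -> forall n, e n = false.
Proof.
  intros H n. destruct (e n) eqn:E; [|reflexivity].
  pose proof (rep_ge _ _ n H E). pose proof (xpos n). lra.
Qed.

Lemma rep_compl v e : reps x v e -> reps x (Series x - v) (fun n => negb (e n)).
Proof.
  unfold reps; intros H.
  pose proof (is_series_minus _ _ _ _ (Series_correct _ xs) H) as H2.
  unfold plus, opp in H2; simpl in H2.
  replace (Series x - v) with (Series x + - v) by ring.
  eapply is_series_ext; [|exact H2].
  intro n; simpl. destruct (e n); simpl; ring.
Qed.

Lemma repS e : reps x (Series x) e -> forall n, e n = true.
Proof.
  intros H n. pose proof (rep_compl _ _ H) as H2. replace (Series x - Series x) with 0 in H2 by ring.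
  pose proof (rep0 _ H2 n) as H3. simpl in H3. destruct (e n); [reflexivity|discriminate H3].
Qed.

End An.

Lemma card_le_empty (P : (nat -> bool) -> Prop) : (forall h, ~ P h) -> card_le P 0.
Proof. intros H g Hg. exfalso. apply (H (g 0%nat)), Hg. lia. Qed.

Lemma card_le_one (P : (nat -> bool) -> Prop) :
  (forall h h', P h -> P h' -> forall n, h n = h' n) -> card_le P 1.
Proof. intros H g Hg. exists 0%nat, 1%nat. split; [lia|]. apply H; apply Hg; lia. Qed.

Section Main.
Variable x : nat -> R.
Hypothesis xpos : forall n, 0 < x n.
Hypothesis xs : ex_series x.
Variables z w y : R.

Definition cls (a b : bool) (h : nat -> bool) : Prop :=
  h 0%nat = a /\ h 1%nat = b /\
  reps x (y - (if a then z else 0) - (if b then w else 0)) (fun n => h (S (S n))).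

Lemma cls_card (a b : bool) (m : nat) :
  card_le (reps x (y - (if a then z else 0) - (if b then w else 0))) m -> card_le (cls a b) m.
Proof.
  intros H g Hg.
  destruct (H (fun i n => g i (S (S n)))) as [i [j [Hij He]]].
  { intros i Hi. apply Hg; auto. }
  exists i, j; split; [exact Hij|].
  destruct (Hg i) as [Hi0 [Hi1 _]]; [lia|]. destruct (Hg j) as [Hj0 [Hj1 _]]; [lia|].
  intros [|[|n]]; [congruence|congruence|apply He].
Qed.

Lemma four (cTT cTF cFT cFF : nat) :
  card_le (cls true true) cTT -> card_le (cls true false) cTF ->
  card_le (cls false true) cFT -> card_le (cls false false) cFF ->
  card_le (reps (prepend2 z w x) y) ((cTT + cTF) + (cFT + cFF)).
Proof.
  intros H1 H2 H3 H4.
  assert (A1 : card_le (fun h => exists b, cls true b h) (cTT + cTF)).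
  { apply (card_le_union _ (cls true true) (cls true false) (fun h => h 1%nat)); auto.
    intros h [b Hb]. destruct Hb as [E0 [E1 R]]. rewrite E1. destruct b; repeat split; auto. }
  assert (A0 : card_le (fun h => exists b, cls false b h) (cFT + cFF)).
  { apply (card_le_union _ (cls false true) (cls false false) (fun h => h 1%nat)); auto.
    intros h [b Hb]. destruct Hb as [E0 [E1 R]]. rewrite E1. destruct b; repeat split; auto. }
  apply (card_le_union _ _ _ (fun h => h 0%nat) _ _ A1 A0).
  intros h Hh. pose proof (rep_shift _ _ _ _ _ Hh) as Hs.
  destruct (h 0%nat) eqn:E0; exists (h 1%nat); repeat split; auto.
Qed.

End Main.

Lemma rep_zero (x : nat -> R) : ex_series x -> reps x 0 (fun _ => false).
Proof.
  intro xs. unfold reps.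
  pose proof (is_series_minus _ _ _ _ (Series_correct _ xs) (Series_correct _ xs)) as H2.
  unfold plus, opp in H2; simpl in H2.
  replace 0 with (Series x + - Series x) by ring.
  eapply is_series_ext; [|exact H2].
  intro n; simpl. ring.
Qed.

Theorem lemma7p1 (x : nat -> R) (z w : R) :
  (forall n, 0 < x n) -> ex_series x ->
  (exists N : nat, forall y, card_le (reps x y) N) ->
  0 < z -> 0 < w ->
  (z + w > Series x \/ (z = Series x / 2 /\ w = Series x / 2)) ->
  (forall M : nat, is_max_card x M ->
     forall y, card_le (reps (prepend2 z w x) y) (3 * M)) /\
  (rng_card_12 x -> forall y, card_le (reps (prepend2 z w x) y) 6).
Proof.
  intros xpos xs _ zp wp Hzw.
  assert (P1 : forall M : nat, is_max_card x M ->
     forall y, card_le (reps (prepend2 z w x) y) (3 * M)).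
  { intros M [Hall _] y.
    assert (HM : (1 <= M)%nat).
    { destruct M as [|M]; [|lia]. exfalso.
      destruct (Hall 0 (fun _ _ => false)) as [i [j [Hij _]]]; [|lia].
      intros; apply rep_zero; exact xs. }
    assert (C : forall a b, card_le (cls x z w y a b) M) by (intros; apply cls_card; apply Hall).
    destruct (classic ((exists h, cls x z w y true true h) /\ (exists h, cls x z w y false false h)))
      as [[[hT HT] [hF HF]]|Hn].
    - destruct HT as [_ [_ RT]]. destruct HF as [_ [_ RF]].
      pose proof (rep_nonneg x xpos _ _ RT) as N1.
      pose proof (rep_le x xpos xs _ _ RF) as N2.
      destruct Hzw as [Hzw|[Ez Ew]]; [lra|].
      assert (Ey : y = Series x) by lra.
      assert (CTT : card_le (cls x z w y true true) 1).
      { apply card_le_one. intros h h' [A0 [A1 A]] [B0 [B1 B]] [|[|n]]; try congruence.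
        replace (y - z - w) with 0 in A, B by lra.
        rewrite (rep0 x xpos _ A n), (rep0 x xpos _ B n); reflexivity. }
      assert (CFF : card_le (cls x z w y false false) 1).
      { apply card_le_one. intros h h' [A0 [A1 A]] [B0 [B1 B]] [|[|n]]; try congruence.
        replace (y - 0 - 0) with (Series x) in A, B by lra.
        rewrite (repS x xpos xs _ A n), (repS x xpos xs _ B n); reflexivity. }
      destruct (Nat.eq_dec M 1) as [EM|NM].
      + assert (Hnone : forall v e, v = Series x / 2 -> ~ reps x v e).
        { intros v e Ev He.
          pose proof (rep_compl x xs _ _ He) as Hc.
          replace (Series x - v) with v in Hc by lra.
          rewrite EM in Hall.
          destruct (Hall v (fun i => if Nat.eqb i 0 then e else fun n => negb (e n)))
            as [i [j [Hij Heq]]].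
          { intros i _. destruct (Nat.eqb i 0); assumption. }
          assert (i = 0%nat /\ j = 1%nat) as [-> ->] by lia.
          specialize (Heq 0%nat). simpl in Heq. destruct (e 0%nat); discriminate. }
        assert (CTF : card_le (cls x z w y true false) 0).
        { apply card_le_empty. intros h [_ [_ A]]. eapply Hnone; [|exact A]; lra. }
        assert (CFT : card_le (cls x z w y false true) 0).
        { apply card_le_empty. intros h [_ [_ A]]. eapply Hnone; [|exact A]; lra. }
        eapply card_le_mono; [intros h Hh; exact Hh| |exact (four x z w y _ _ _ _ CTT CTF CFT CFF)]. lia.
      + eapply card_le_mono; [intros h Hh; exact Hh| |exact (four x z w y _ _ _ _ CTT (C _ _) (C _ _) CFF)]. lia.
    - apply not_and_or in Hn. destruct Hn as [Hn|Hn].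
      + assert (E : card_le (cls x z w y true true) 0)
          by (apply card_le_empty; intros h Hh; apply Hn; exists h; exact Hh).
        eapply card_le_mono; [intros h Hh; exact Hh| |exact (four x z w y _ _ _ _ E (C _ _) (C _ _) (C _ _))]. lia.
      + assert (E : card_le (cls x z w y false false) 0)
          by (apply card_le_empty; intros h Hh; apply Hn; exists h; exact Hh).
        eapply card_le_mono; [intros h Hh; exact Hh| |exact (four x z w y _ _ _ _ (C _ _) (C _ _) (C _ _) E)]. lia. }
  split; [exact P1|].
  intros [Hr [_ H2]] y.
  apply (P1 2%nat). split; [|exact H2].
  intro v. destruct (classic (in_ach x v)) as [Hin|Hnin].
  - destruct (Hr v Hin) as [[_ H]|[_ H]]; eapply card_le_mono; try exact H; auto.
  - eapply card_le_mono; [intros h Hh; exact Hh| |apply card_le_empty]; [lia|].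
    intros h Hh; apply Hnin; exists h; exact Hh.
Qed.
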